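(* For $H\in[0,1]$ let $\rho_1(H)=2^{2H-1}-1$, $\rho_2(H)=\frac12\left(3^{2H}-2^{2H+1}+1\right)$ and $$\det\Sigma_3(H)=\det\begin{pmatrix}1&\rho_1(H)&\rho_2(H)\\ \rho_1(H)&1&\rho_1(H)\\ \rho_2(H)&\rho_1(H)&1\end{pmatrix}=1+2\rho_1(H)^2\rho_2(H)-\rho_2(H)^2-2\rho_1(H)^2 .$$ Then $\det\Sigma_3(H)$ increases from $\frac12$ to $1$ as $H$ increases from $0$ to $\frac12$, and decreases from $1$ to $0$ as $H$ increases from $\frac12$ to $1$. Consequently, $\log(\det\Sigma_3(H))$ increases from $-\log 2$ to $0$ as $H$ increases from $0$ to $\frac12$, and decreases from $0$ to $-\infty$ as $H$ increases from $\frac12$ to $1$.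
   Context: $\Sigma_3(H)$ is the covariance matrix of $(G^H_1,G^H_2,G^H_3)$, where $G^H_k=B^H_k-B^H_{k-1}$ is fractional Gaussian noise built from a fractional Brownian motion with Hurst index $H$; the autocovariances are $\rho_k(H)=\frac12((k+1)^{2H}-2k^{2H}+(k-1)^{2H})$, and the explicit formulas for $\rho_1,\rho_2$ above are used also at $H=0,1$. Logarithms are natural, with $\log 0=-\infty$. *)

(* Defs.v *)
From HB Require Import structures.
From mathcomp Require Import all_boot all_order all_algebra.
From mathcomp Require Import all_classical all_reals all_analysis.
Set Implicit Arguments. Unset Strict Implicit. Unset Printing Implicit Defensive.
Import Order.TTheory GRing.Theory Num.Theory.
Local Open Scope ring_scope.

Section FGN.
Variable R : realType.

Definition rho1 (H : R) : R := (2 : R) `^ (2 * H - 1) - 1.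
Definition rho2 (H : R) : R := ((3 : R) `^ (2 * H) - (2 : R) `^ (2 * H + 1) + 1) / 2.

Definition Sigma3 (H : R) : 'M[R]_3 :=
  \matrix_(i < 3, j < 3)
    (if i == j then 1
     else if `|(i : int) - (j : int)|%N == 1%N then rho1 H else rho2 H).

Definition detSigma3 (H : R) : R := \det (Sigma3 H).

Definition elog (x : R) : \bar R := if 0 < x then (ln x)%:E else -oo%E.

End FGN.

(* Main.v *)
Require Import Defs.
From HB Require Import structures.
From mathcomp Require Import all_boot all_order all_algebra.
From mathcomp Require Import all_classical all_reals all_analysis.
From mathcomp Require Import ring lra.
Import Order.TTheory GRing.Theory Num.Theory.
Local Open Scope ring_scope.
Section S.
Variable R : realType.
Lemma e2 : expR (ln (2:R)) = 2.
Proof. by rewrite lnK // posrE. Qed.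
Lemma e3 : expR (ln (3:R)) = 3.
Proof. by rewrite lnK // posrE. Qed.
Lemma a2pos : 0 < ln (2:R).
Proof. apply: ln_gt0; lra. Qed.
Lemma a3pos : 0 < ln (3:R).
Proof. apply: ln_gt0; lra. Qed.
Lemma pw (b r : R) : 0 < b -> b `^ r = expR (r * ln b).
Proof. by move=> hb; rewrite /powR (gt_eqF hb). Qed.
Lemma tang (k s c : R) : expR (k * c) * (1 + k * (s - c)) <= expR (k * s).
Proof.
have -> : k * s = k * c + k * (s - c) by ring.
rewrite expRD ler_pM2l ?expR_gt0 //; exact: expR_ge1Dx.
Qed.
Lemma tangs (k s c : R) : k != 0 -> s != c -> expR (k * c) * (1 + k * (s - c)) < expR (k * s).
Proof.
move=> hk hs.
have -> : k * s = k * c + k * (s - c) by ring.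
rewrite expRD ltr_pM2l ?expR_gt0 //; apply: expR_gt1Dx.
by rewrite mulf_neq0 // subr_eq0.
Qed.
Definition hh (w1 w2 w0 k1 k2 c : R) := w1 * expR (k1 * c) + w2 * expR (k2 * c) - w0.
Lemma conv (w1 w2 w0 k1 k2 c : R) : k1 != 0 -> 0 < w1 -> 0 < w2 ->
  hh w1 w2 w0 k1 k2 (2^-1) = 0 -> hh w1 w2 w0 k1 k2 1 = 0 ->
  (c < 2^-1 -> 0 < hh w1 w2 w0 k1 k2 c) /\ (2^-1 < c < 1 -> hh w1 w2 w0 k1 k2 c < 0).
Proof.
rewrite /hh => hk h1 h2 z1 z2.
have hl : (2^-1 : R) < 1 by lra.
split.
- move=> hc.
  have t1 := tangs k1 c (2^-1) hk (negbT (lt_eqF hc)).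
  have t2 := tang k2 c (2^-1).
  have t3 := tangs k1 1 (2^-1) hk (negbT (gt_eqF hl)).
  have t4 := tang k2 1 (2^-1).
  move: t1 t2 t3 t4 z1 z2.
  set A1 := expR (k1 * 2^-1).
  set A2 := expR (k2 * 2^-1).
  set E1 := expR (k1 * c). set E2 := expR (k2 * c).
  set F1 := expR (k1 * 1). set F2 := expR (k2 * 1).
  move=> t1 t2 t3 t4 z1 z2.
  have u1 : w1 * (A1 * (1 + k1 * (c - 2^-1))) < w1 * E1 by rewrite ltr_pM2l.
  have u2 : w2 * (A2 * (1 + k2 * (c - 2^-1))) <= w2 * E2 by rewrite ler_pM2l.
  have u3 : w1 * (A1 * (1 + k1 * (1 - 2^-1))) < w1 * F1 by rewrite ltr_pM2l.
  have u4 : w2 * (A2 * (1 + k2 * (1 - 2^-1))) <= w2 * F2 by rewrite ler_pM2l.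
  set d := w1 * k1 * A1 + w2 * k2 * A2.
  have dn : d < 0 by rewrite /d; nra.
  have : 0 < d * (c - 2^-1) by nra.
  rewrite /d; nra.
- case/andP => hc1 hc2.
  have t1 := tangs k1 (2^-1) c hk (negbT (lt_eqF hc1)).
  have t2 := tang k2 (2^-1) c.
  have t3 := tangs k1 1 c hk (negbT (gt_eqF hc2)).
  have t4 := tang k2 1 c.
  move: t1 t2 t3 t4 z1 z2.
  set A1 := expR (k1 * 2^-1).
  set A2 := expR (k2 * 2^-1).
  set E1 := expR (k1 * c). set E2 := expR (k2 * c).
  set F1 := expR (k1 * 1). set F2 := expR (k2 * 1).
  move=> t1 t2 t3 t4 z1 z2.
  have u1 : w1 * (E1 * (1 + k1 * (2^-1 - c))) < w1 * A1 by rewrite ltr_pM2l.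
  have u2 : w2 * (E2 * (1 + k2 * (2^-1 - c))) <= w2 * A2 by rewrite ler_pM2l.
  have u3 : w1 * (E1 * (1 + k1 * (1 - c))) < w1 * F1 by rewrite ltr_pM2l.
  have u4 : w2 * (E2 * (1 + k2 * (1 - c))) <= w2 * F2 by rewrite ler_pM2l.
  set d := w1 * k1 * E1 + w2 * k2 * E2.
  set h := w1 * E1 + w2 * E2 - w0.
  have v1 : h + d * (2^-1 - c) < 0 by rewrite /h /d; nra.
  have v2 : h + d * (1 - c) < 0 by rewrite /h /d; nra.
  nra.
Qed.
Lemma dlin (k x : R) : is_derive x 1 (fun H : R => k * H) k.
Proof.
have := @is_deriveZ R R R id k x 1 1 (is_derive_id x 1).
by rewrite /GRing.scale /= mulr1.
Qed.
Lemma dE (c k x : R) : is_derive x 1 (fun H : R => c * expR (k * H)) (c * (expR (k * x) * k)).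
Proof.
have h := is_derive1_comp (is_derive_expR (k * x)) (dlin k x).
have := @is_deriveZ R R R _ c x 1 _ h.
by [].
Qed.
Lemma dD (f g : R -> R) (x a b : R) : is_derive x 1 f a -> is_derive x 1 g b ->
  is_derive x 1 (fun H => f H + g H) (a + b).
Proof. move=> h1 h2; exact: is_deriveD. Qed.
Definition uu (H : R) := expR ((2 * ln 2) * H).
Definition vv (H : R) := expR ((2 * ln 3) * H).
Definition Pol (u v : R) := -1 + 2 * v + 3 * u ^+ 2 - 2 * u ^+ 3 - v ^+ 2 + u ^+ 2 * v.
Definition DD (H : R) := -1 + 2 * expR ((2 * ln 3) * H) + 3 * expR ((4 * ln 2) * H)
  + (-2) * expR ((6 * ln 2) * H) + (-1) * expR ((4 * ln 3) * H)
  + 1 * expR ((4 * ln 2 + 2 * ln 3) * H).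
Definition DD' (x : R) := 0 + 2 * (expR ((2 * ln 3) * x) * (2 * ln 3))
  + 3 * (expR ((4 * ln 2) * x) * (4 * ln 2))
  + (-2) * (expR ((6 * ln 2) * x) * (6 * ln 2)) + (-1) * (expR ((4 * ln 3) * x) * (4 * ln 3))
  + 1 * (expR ((4 * ln 2 + 2 * ln 3) * x) * (4 * ln 2 + 2 * ln 3)).
Lemma dDD (x : R) : is_derive x 1 DD (DD' x).
Proof.
repeat (apply: dD; last exact: dE).
all: try exact: is_derive_cst.
Qed.
Lemma expRmul (a b c : R) : expR (a * c) * expR (b * c) = expR ((a + b) * c).
Proof. by rewrite -expRD; congr expR; ring. Qed.
Lemma expRn (n : nat) (a c : R) : expR ((n%:R * a) * c) = expR (a * c) ^+ n.
Proof. by rewrite -expRM_natl; congr expR; ring. Qed.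
Lemma DD_pol H : DD H = Pol (uu H) (vv H).
Proof.
rewrite /DD /Pol /uu /vv.
rewrite (_ : 4 * ln 2 = 2%:R * (2 * ln (2:R))); last by ring.
rewrite (_ : 6 * ln 2 = 3%:R * (2 * ln (2:R))); last by ring.
rewrite (_ : 4 * ln 3 = 2%:R * (2 * ln (3:R))); last by ring.
rewrite -expRmul !expRn; ring.
Qed.
Lemma DD'_form x : DD' x = 2 * (2 * ln 2) * uu x ^+ 2 * (3 - 3 * uu x + vv x)
   + (2 * ln 3) * vv x * (2 - 2 * vv x + uu x ^+ 2).
Proof.
rewrite /DD' /uu /vv.
rewrite (_ : 4 * ln 2 = 2%:R * (2 * ln (2:R))); last by ring.
rewrite (_ : 6 * ln 2 = 3%:R * (2 * ln (2:R))); last by ring.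
rewrite (_ : 4 * ln 3 = 2%:R * (2 * ln (3:R))); last by ring.
rewrite -expRmul !expRn; ring.
Qed.
Lemma det1x1 (K : comNzRingType) (B : 'M[K]_1) : \det B = B 0 0.
Proof. by rewrite {1}[B]mx11_scalar det_scalar1. Qed.
Lemma detS (H : R) : detSigma3 H = 1 + 2 * rho1 H ^+ 2 * rho2 H - rho2 H ^+ 2 - 2 * rho1 H ^+ 2.
Proof.
rewrite /detSigma3 (expand_det_row _ 0) !big_ord_recl big_ord0 /cofactor.
rewrite !(expand_det_row _ 0) !big_ord_recl !big_ord0 /cofactor.
rewrite !det1x1 !mxE /=.
rewrite /bump /=; ring.
Qed.
Lemma uu_pos H : 0 < uu H. Proof. exact: expR_gt0. Qed.
Lemma vv_pos H : 0 < vv H. Proof. exact: expR_gt0. Qed.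
Lemma rho1E H : rho1 H = uu H / 2 - 1.
Proof.
rewrite /rho1 pw; last by lra.
rewrite (_ : (2 * H - 1) * ln 2 = (2 * ln 2) * H + - ln (2:R)); last by ring.
by rewrite expRD expRN e2.
Qed.
Lemma rho2E H : rho2 H = (vv H - 2 * uu H + 1) / 2.
Proof.
rewrite /rho2 !pw; try lra.
rewrite (_ : (2 * H + 1) * ln 2 = (2 * ln 2) * H + ln (2:R)); last by ring.
rewrite expRD e2 /vv /uu; congr (_ / 2); congr (_ + _); congr (_ - _).
  by congr expR; ring.
ring.
Qed.
Lemma detD H : detSigma3 H = Pol (uu H) (vv H) / 4.
Proof. by rewrite detS rho1E rho2E /Pol; field. Qed.
Lemma uu_half : uu (2^-1) = 2.
Proof. by rewrite /uu (_ : 2 * ln 2 * 2^-1 = ln (2:R)) ?e2 //; field. Qed.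
Lemma vv_half : vv (2^-1) = 3.
Proof. by rewrite /vv (_ : 2 * ln 3 * 2^-1 = ln (3:R)) ?e3 //; field. Qed.
Lemma uu_1 : uu 1 = 4.
Proof. by rewrite /uu (_ : 2 * ln 2 * 1 = 2%:R * ln (2:R)) ?expRM_natl ?e2 //; ring. Qed.
Lemma vv_1 : vv 1 = 9.
Proof. by rewrite /vv (_ : 2 * ln 3 * 1 = 2%:R * ln (3:R)) ?expRM_natl ?e3 //; ring. Qed.
Lemma uu_0 : uu 0 = 1. Proof. by rewrite /uu mulr0 expR0. Qed.
Lemma vv_0 : vv 0 = 1. Proof. by rewrite /vv mulr0 expR0. Qed.
Lemma p_sign c : (c < 2^-1 -> 0 < 3 - 3 * uu c + vv c) /\ (2^-1 < c < 1 -> 3 - 3 * uu c + vv c < 0).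
Proof.
have idt c' : 3 - 3 * uu c' + vv c' = uu c' * hh 3 1 3 (-(2*ln 2)) (2*ln 3 - 2*ln 2) c'.
  have h1 := expRmul (2 * ln 2) (-(2 * ln 2)) c'.
  have h2 := expRmul (2 * ln 2) (2 * ln 3 - 2 * ln 2) c'.
  rewrite addrN mul0r expR0 in h1.
  rewrite (_ : 2 * ln 2 + (2 * ln 3 - 2 * ln 2) = 2 * ln (3:R)) in h2; last by ring.
  rewrite /hh /uu /vv; nra.
have z1 : hh 3 1 3 (-(2*ln 2)) (2*ln 3 - 2*ln 2) (2^-1) = 0.
  have := idt (2^-1); rewrite uu_half vv_half => h; nra.
have z2 : hh 3 1 3 (-(2*ln 2)) (2*ln 3 - 2*ln 2) 1 = 0.
  have := idt 1; rewrite uu_1 vv_1 => h; nra.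
have k0 : -(2 * ln (2:R)) != 0 by rewrite oppr_eq0 mulf_neq0 // gt_eqF // a2pos.
have [hA hB] := conv 3 1 3 _ _ c k0 (ltr0n _ 3) ltr01 z1 z2.
have up := uu_pos c.
rewrite idt; split => h.
  by have := hA h; nra.
by have := hB h; nra.
Qed.
Lemma s_sign c : (c < 2^-1 -> 0 < 2 - 2 * vv c + uu c ^+ 2) /\ (2^-1 < c < 1 -> 2 - 2 * vv c + uu c ^+ 2 < 0).
Proof.
have idt c' : 2 - 2 * vv c' + uu c' ^+ 2 = vv c' * hh 2 1 2 (-(2*ln 3)) (4*ln 2 - 2*ln 3) c'.
  have h1 := expRmul (2 * ln 3) (-(2 * ln 3)) c'.
  have h2 := expRmul (2 * ln 3) (4 * ln 2 - 2 * ln 3) c'.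
  rewrite addrN mul0r expR0 in h1.
  rewrite (_ : 2 * ln 3 + (4 * ln 2 - 2 * ln 3) = 2%:R * (2 * ln (2:R))) in h2; last by ring.
  rewrite [X in _ = X]expRn in h2.
  rewrite /hh /uu /vv; nra.
have z1 : hh 2 1 2 (-(2*ln 3)) (4*ln 2 - 2*ln 3) (2^-1) = 0.
  have := idt (2^-1); rewrite uu_half vv_half => h; nra.
have z2 : hh 2 1 2 (-(2*ln 3)) (4*ln 2 - 2*ln 3) 1 = 0.
  have := idt 1; rewrite uu_1 vv_1 => h; nra.
have k0 : -(2 * ln (3:R)) != 0 by rewrite oppr_eq0 mulf_neq0 // gt_eqF // a3pos.
have [hA hB] := conv 2 1 2 _ _ c k0 (ltr0n _ 2) ltr01 z1 z2.
have up := vv_pos c.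
rewrite idt; split => h.
  by have := hA h; nra.
by have := hB h; nra.
Qed.
Lemma detE H : detSigma3 H = DD H / 4.
Proof. by rewrite detD DD_pol. Qed.
Lemma DD'_pos c : c < 2^-1 -> 0 < DD' c.
Proof.
move=> hc; rewrite DD'_form.
have [pA _] := p_sign c; have [sA _] := s_sign c.
have q1 : 0 < 2 * (2 * ln (2:R)) * uu c ^+ 2.
  by rewrite !mulr_gt0 ?exprn_gt0 ?uu_pos ?a2pos.
have q2 : 0 < 2 * ln (3:R) * vv c by rewrite !mulr_gt0 ?vv_pos ?a3pos.
by apply: addr_gt0; apply: mulr_gt0 => //; [exact: pA | exact: sA].
Qed.
Lemma DD'_neg c : 2^-1 < c < 1 -> DD' c < 0.
Proof.
move=> hc; rewrite DD'_form.
have [_ pB] := p_sign c; have [_ sB] := s_sign c.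
have q1 : 0 < 2 * (2 * ln (2:R)) * uu c ^+ 2.
  by rewrite !mulr_gt0 ?exprn_gt0 ?uu_pos ?a2pos.
have q2 : 0 < 2 * ln (3:R) * vv c by rewrite !mulr_gt0 ?vv_pos ?a3pos.
have r1 := pB hc; have r2 := sB hc.
have : 2 * (2 * ln (2:R)) * uu c ^+ 2 * (3 - 3 * uu c + vv c) < 0 by rewrite pmulr_rlt0.
have : 2 * ln (3:R) * vv c * (2 - 2 * vv c + uu c ^+ 2) < 0 by rewrite pmulr_rlt0.
lra.
Qed.
Lemma DDmvt x y : x < y -> exists2 c, c \in `]x, y[ & DD y - DD x = DD' c * (y - x).
Proof.
move=> xy; apply: (@MVT R DD DD' x y xy).
  by move=> z _; exact: dDD.
by apply: derivable_within_continuous => z _; exact: (@ex_derive _ _ _ _ _ _ _ (dDD z)).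
Qed.
Lemma incr x y : x < y -> y <= 2^-1 -> DD x < DD y.
Proof.
move=> xy hy; have [c] := DDmvt _ _ xy; rewrite in_itv /= => /andP[c1 c2] E.
have := DD'_pos _ (lt_le_trans c2 hy) => h.
have : 0 < DD' c * (y - x) by rewrite mulr_gt0 // subr_gt0.
lra.
Qed.
Lemma decr x y : 2^-1 <= x -> x < y -> y <= 1 -> DD y < DD x.
Proof.
move=> hx xy hy; have [c] := DDmvt _ _ xy; rewrite in_itv /= => /andP[c1 c2] E.
have h : DD' c < 0 by apply: DD'_neg; apply/andP; split; [exact: le_lt_trans hx c1 | exact: lt_le_trans c2 hy].
have : DD' c * (y - x) < 0 by rewrite nmulr_rlt0 // subr_gt0.
lra.
Qed.
End S.

Theorem mainTheorem2 (R : realType) :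
  (forall H : R, H \in `[0, 1] ->
     detSigma3 H = 1 + 2 * rho1 H ^+ 2 * rho2 H - rho2 H ^+ 2 - 2 * rho1 H ^+ 2) /\
  (forall x y : R, x \in `[0, 2^-1] -> y \in `[0, 2^-1] -> x < y ->
     detSigma3 x < detSigma3 y) /\
  (forall x y : R, x \in `[2^-1, 1] -> y \in `[2^-1, 1] -> x < y ->
     detSigma3 y < detSigma3 x) /\
  detSigma3 (0:R) = 2^-1 /\ detSigma3 (2^-1 : R) = 1 /\ detSigma3 (1:R) = 0 /\
  (forall x y : R, x \in `[0, 2^-1] -> y \in `[0, 2^-1] -> x < y ->
     (elog (detSigma3 x) < elog (detSigma3 y))%E) /\
  (forall x y : R, x \in `[2^-1, 1] -> y \in `[2^-1, 1] -> x < y ->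
     (elog (detSigma3 y) < elog (detSigma3 x))%E) /\
  elog (detSigma3 (0:R)) = (- ln 2)%:E /\ elog (detSigma3 (2^-1 : R)) = 0%E /\
  elog (detSigma3 (1:R)) = -oo%E.
Proof.
have inc : forall x y : R, x \in `[0, 2^-1] -> y \in `[0, 2^-1] -> x < y ->
     detSigma3 x < detSigma3 y.
  move=> x y; rewrite !in_itv /= => /andP[x0 x1] /andP[y0 y1] xy.
  rewrite !detE; have := incr _ _ _ xy y1; lra.
have dec : forall x y : R, x \in `[2^-1, 1] -> y \in `[2^-1, 1] -> x < y ->
     detSigma3 y < detSigma3 x.
  move=> x y; rewrite !in_itv /= => /andP[x0 x1] /andP[y0 y1] xy.
  rewrite !detE; have := decr _ _ _ x0 xy y1; lra.
have d0 : detSigma3 (0:R) = 2^-1.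
  by rewrite detE DD_pol uu_0 vv_0 /Pol; field.
have dh : detSigma3 (2^-1:R) = 1.
  by rewrite detE DD_pol uu_half vv_half /Pol; field.
have d1 : detSigma3 (1:R) = 0.
  by rewrite detE DD_pol uu_1 vv_1 /Pol; field.
have posL : forall x : R, x \in `[0, 2^-1] -> 0 < detSigma3 x.
  move=> x hx; have [->|x0] := eqVneq x 0; first by rewrite d0; lra.
  have h0 : (0:R) \in `[0, 2^-1] by rewrite in_itv /= lexx /=; lra.
  have := inc 0 x h0 hx; rewrite d0 => h.
  have : 0 < x by move: hx; rewrite in_itv /= => /andP[a _]; rewrite lt_neqAle eq_sym x0.
  move=> xp; have := h xp; lra.
have h1 : (1:R) \in `[2^-1, 1] by rewrite in_itv /= lexx andbT; lra.
have posR : forall x : R, x \in `[2^-1, 1] -> x < 1 -> 0 < detSigma3 x.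
  by move=> x hx x1; have := dec x 1 hx h1 x1; rewrite d1.
split; first by move=> H _; exact: detS.
split; first exact: inc.
split; first exact: dec.
do 3 (split; first by []).
split.
  move=> x y hx hy xy.
  by rewrite /elog (posL x hx) (posL y hy) lte_fin ltr_ln ?posrE ?posL //; exact: inc.
split.
  move=> x y hx hy xy.
  have x1 : x < 1 by move: hy; rewrite in_itv /= => /andP[_ b]; exact: lt_le_trans xy b.
  rewrite /elog (posR x hx x1); case: ifP => hy0.
    by rewrite lte_fin ltr_ln ?posrE ?hy0 ?(posR x hx x1) //; exact: dec.
  exact: ltNyr.
split; first by rewrite /elog d0 ifT ?lnV ?posrE //; lra.
split; first by rewrite /elog dh ifT ?ln1 //; lra.
by rewrite /elog d1 ltxx.
Qed.
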